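(* For any second-order Lagrangian $L$, the Hilbert forms satisfy $S^i\vartheta^m=\tfrac12 S^{im}\,dL$ for all $i,m\in\{1,2\}$; consequently $S^i\vartheta^m=S^m\vartheta^i$.
   Context: Let $E$ be a smooth manifold of dimension $n$ with local coordinates $(u^\alpha)$. For $k\ge 1$, $\mathcal F^k_{(2)}E$ denotes the bundle of $k$-th order 2-frames in $E$ (regular $k$-th order 2-velocities, i.e. $k$-jets at $0$ of maps $\mathbb R^2\to E$ of rank 2 at $0$), with induced coordinates $u^\alpha_{i_1\cdots i_s}$ ($0\le s\le k$, indices in $\{1,2\}$, totally symmetric in the subscripts). Pull-backs along the projections $\mathcal F^l_{(2)}E\to\mathcal F^k_{(2)}E$ are omitted. $\#(i_1\cdots i_s)$ denotes the number of distinct rearrangements of $(i_1,\dots,i_s)$; repeated indices in $\{1,2\}$ are summed. The total derivatives are the vector fields along $\mathcal F^{k+1}_{(2)}E\to\mathcal F^k_{(2)}E$ given by $\mathbf T_i=\sum_{s=0}^k \frac{1}{\#(i_1\cdots i_s)}u^\alpha_{i i_1\cdots i_s}\,\partial/\partial u^\alpha_{i_1\cdots i_s}$, and the vertical endomorphisms are the type $(1,1)$ tensor fields on $\mathcal F^{k+1}_{(2)}E$ given by $S^j=\sum_{s=0}^k \frac{s+1}{\#(i_1\cdots i_s)}\,\partial/\partial u^\alpha_{j i_1\cdots i_s}\otimes du^\alpha_{i_1\cdots i_s}$. The $S^i$ commute and $S^{i_1\cdots i_s}$ denotes their composite. On forms, $S^i$ acts as the degree-zero derivation $(S^i\omega)(X_1,\dots,X_r)=\sum_a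 \omega(X_1,\dots,S^iX_a,\dots,X_r)$ (zero on functions). Contraction with $\mathbf T_i$ is denoted $i_i$ and the Lie derivative $d_i=d\,i_i+i_i\,d$; the $d_i$ commute and $d_{j_1\cdots j_s}$ denotes their composite. A second-order Lagrangian is a smooth function $L$ on (an open subset of) $\mathcal F^2_{(2)}E$. Its Hilbert forms are the 1-forms $\vartheta^i=(S^i-\tfrac12 d_jS^{ji})\,dL$ on $\mathcal F^3_{(2)}E$. *)

(* Defs.v *)
From HB Require Import structures.
From mathcomp Require Import all_boot all_order all_algebra.
From mathcomp Require Import reals topology normedtype derive.
Set Implicit Arguments. Unset Strict Implicit. Unset Printing Implicit Defensive.
Import Order.TTheory GRing.Theory Num.Theory numFieldNormedType.Exports.
Local Open Scope ring_scope.

(* Local (chart) description of the bundles F^k_(2) E, E with n coordinates.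
   A point carries all induced coordinates u^alpha_{i_1..i_s}; by total
   symmetry of the subscripts the coordinate only depends on the multiset
   {i_1..i_s} of indices in {1,2}, encoded by (a,b) = (#1's, #2's).
   Thus  u^alpha_{i_1..i_s} = p alpha a b.  Functions on F^k are functions
   of points that only depend on the coordinates of order a+b <= k
   (pull-backs along the projections are omitted, as in the paper).
   The index set {1,2} is 'I_2 (0 <-> 1, 1 <-> 2). *)

Section Jets.
Variables (R : realType) (n : nat).

Definition pt := 'I_n -> nat -> nat -> R.

(* a 1-form, given by its coefficient on du^alpha_{(a,b)} at each point *)
Definition form := pt -> 'I_n -> nat -> nat -> R.

Definition c1 (t : seq 'I_2) : nat := count (fun i : 'I_2 => nat_of_ord i == 0%N) t.
Definition c2 (t : seq 'I_2) : nat := count (fun i : 'I_2 => nat_of_ord i == 1%N) t.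

Definition nrearr (t : seq 'I_2) : nat := size (permutations t).

Definition upd (p : pt) (al : 'I_n) (a b : nat) (x : R) : pt :=
  fun be c d => if (be == al) && (c == a) && (d == b) then x else p be c d.

Definition pd (f : pt -> R) (al : 'I_n) (a b : nat) (p : pt) : R :=
  derive1 (fun x : R => f (upd p al a b x)) (p al a b).

Definition dfun (f : pt -> R) : form := fun p al a b => pd f al a b p.

(* vertical endomorphism S^j on F^{k+1},
   S^j = sum_{s=0}^k (s+1)/#(i_1..i_s) d/du^al_{j i_1..i_s} (x) du^al_{i_1..i_s}
   (repeated indices summed over all sequences), acting on 1-forms as
   (S^j w)(X) = w(S^j X); written out on coefficients. *)
Definition Sop (k : nat) (j : 'I_2) (w : form) : form := fun p al a b =>
  \sum_(s < k.+1) \sum_(t : s.-tuple 'I_2)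
    (if (c1 t == a) && (c2 t == b)
     then (s.+1)%:R / (nrearr t)%:R * w p al (c1 (j :: t)) (c2 (j :: t))
     else 0).

(* components of the total derivative T_j (along F^{k+1} -> F^k):
   T_j = sum_{s=0}^k 1/#(i_1..i_s) u^al_{j i_1..i_s} d/du^al_{i_1..i_s};
   the component on d/du^al_{(a,b)} at p *)
Definition Tcomp (k : nat) (j : 'I_2) (p : pt) (al : 'I_n) (a b : nat) : R :=
  \sum_(s < k.+1) \sum_(t : s.-tuple 'I_2)
    (if (c1 t == a) && (c2 t == b)
     then (nrearr t)%:R^-1 * p al (c1 (j :: t)) (c2 (j :: t))
     else 0).

Definition Tapp (k : nat) (j : 'I_2) (f : pt -> R) (p : pt) : R :=
  \sum_(al < n) \sum_(s < k.+1) \sum_(t : s.-tuple 'I_2)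
    (nrearr t)%:R^-1 * p al (c1 (j :: t)) (c2 (j :: t)) * pd f al (c1 t) (c2 t) p.

(* Lie derivative d_j of a 1-form (on F^k) along T_j, in coordinates:
   (L_T w)_B = T(w_B) + sum_A w_A dT^A/du^B, A ranging over the
   coordinates of F^k (order a'+b' <= k). *)
Definition dop (k : nat) (j : 'I_2) (w : form) : form := fun p be a b =>
  Tapp k j (fun q => w q be a b) p
  + \sum_(al < n) \sum_(a' < k.+1) \sum_(b' < k.+1 - a')
      w p al a' b' * pd (fun q => Tcomp k j q al a' b') be a b p.

(* Hilbert forms of a second order Lagrangian (on F^3):
   theta^i = (S^i - 1/2 d_j S^{ji}) dL, summed over j *)
Definition hilbert (L : pt -> R) (i : 'I_2) : form := fun p al a b =>
  Sop 2 i (dfun L) p al a b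
  - 2^-1 * \sum_(j < 2) dop 2 j (Sop 2 j (Sop 2 i (dfun L))) p al a b.

Definition second_order (L : pt -> R) : Prop :=
  forall p q : pt, (forall al a b, (a + b <= 2)%N -> p al a b = q al a b) ->
    L p = L q.

End Jets.

(* Main.v *)
Require Import Defs.
From HB Require Import structures.
From mathcomp Require Import all_boot all_order all_algebra.
From mathcomp Require Import reals topology normedtype derive.
From mathcomp Require Import boolp zify ring.
Import GRing.Theory Num.Theory numFieldNormedType.Exports.
Local Open Scope ring_scope.

Section H.
Variables (R : realType) (n : nat).

Definition Kc (k a b : nat) : R := \sum_(s < k.+1) \sum_(t : s.-tuple 'I_2)
    (if (c1 t == a) && (c2 t == b) then (s.+1)%:R / (nrearr t)%:R else 0).
Definition Kt (k a b : nat) : R := \sum_(s < k.+1) \sum_(t : s.-tuple 'I_2)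
    (if (c1 t == a) && (c2 t == b) then (nrearr t)%:R^-1 else 0).

Lemma c1_cons (j : 'I_2) t : c1 (j :: t) = ((nat_of_ord j == 0%N) + c1 t)%N.
Proof. by []. Qed.
Lemma c2_cons (j : 'I_2) t : c2 (j :: t) = ((nat_of_ord j == 1%N) + c2 t)%N.
Proof. by []. Qed.

Lemma Sop_eq k j (w : Defs.form R n) p al a b : Sop k j w p al a b =
  Kc k a b * w p al ((nat_of_ord j == 0%N) + a)%N ((nat_of_ord j == 1%N) + b)%N.
Proof.
rewrite /Sop /Kc mulr_suml; apply: eq_bigr => s _; rewrite mulr_suml.
apply: eq_bigr => t _; rewrite c1_cons c2_cons.
by case: ifP => [/andP[/eqP-> /eqP->]|_]; rewrite ?mul0r.
Qed.

Lemma Tcomp_eq k j (p : Defs.pt R n) al a b : Tcomp k j p al a b =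
  Kt k a b * p al ((nat_of_ord j == 0%N) + a)%N ((nat_of_ord j == 1%N) + b)%N.
Proof.
rewrite /Tcomp /Kt mulr_suml; apply: eq_bigr => s _; rewrite mulr_suml.
apply: eq_bigr => t _; rewrite c1_cons c2_cons.
by case: ifP => [/andP[/eqP-> /eqP->]|_]; rewrite ?mul0r.
Qed.

Lemma c12 (t : seq 'I_2) : (c1 t + c2 t)%N = size t.
Proof. elim: t => //= x t <-; case: x => [[|[|]]] //= _; lia. Qed.

Lemma Kc_gen k a b : Kc k a b = \sum_(s < k.+1 | nat_of_ord s == (a + b)%N) \sum_(t : s.-tuple 'I_2)
    (if (c1 t == a) && (c2 t == b) then (s.+1)%:R / (nrearr t)%:R else 0).
Proof.
rewrite /Kc (bigID (fun s : 'I_k.+1 => nat_of_ord s == (a+b)%N)) /= addrC big1 ?add0r //.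
move=> s /negP Hs; apply: big1 => t _; case: ifP => // /andP[/eqP Ha /eqP Hb].
by case: Hs; rewrite -Ha -Hb c12 size_tuple.
Qed.

Lemma Kt_gen k a b : Kt k a b = \sum_(s < k.+1 | nat_of_ord s == (a + b)%N) \sum_(t : s.-tuple 'I_2)
    (if (c1 t == a) && (c2 t == b) then (nrearr t)%:R^-1 else 0).
Proof.
rewrite /Kt (bigID (fun s : 'I_k.+1 => nat_of_ord s == (a+b)%N)) /= addrC big1 ?add0r //.
move=> s /negP Hs; apply: big1 => t _; case: ifP => // /andP[/eqP Ha /eqP Hb].
by case: Hs; rewrite -Ha -Hb c12 size_tuple.
Qed.

Lemma Kc00 k : Kc k 0 0 = 1.
Proof.
rewrite Kc_gen (big_pred1 ord0) //= (big_pred1 [tuple]) /=; last by move=> t; apply/esym/eqP; exact: tuple0.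
by rewrite /nrearr /= divr1.
Qed.

Lemma Kt00 k : Kt k 0 0 = 1.
Proof.
rewrite Kt_gen (big_pred1 ord0) //= (big_pred1 [tuple]) /=; last by move=> t; apply/esym/eqP; exact: tuple0.
by rewrite /nrearr /= invr1.
Qed.

Lemma Kc_big k a b : (k < a + b)%N -> Kc k a b = 0.
Proof.
move=> H; rewrite Kc_gen big_pred0 // => s; apply/negP => /eqP Hs.
by move: (ltn_ord s); rewrite Hs ltnS leqNgt H.
Qed.

Lemma tuple1_eta (T : Type) (t : 1.-tuple T) : t = [tuple thead t].
Proof. by apply: val_inj; case: t => -[|x [|y s]]. Qed.

Lemma Kc_e (j : 'I_2) : Kc 2 (nat_of_ord j == 0%N) (nat_of_ord j == 1%N) = 2.
Proof.
have H1 : ((nat_of_ord j == 0%N) + (nat_of_ord j == 1%N) = 1)%N by case: j => [[|[|]]].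
rewrite Kc_gen H1 (big_pred1 (inord 1 : 'I_3)); last by move=> s; rewrite /= -(inj_eq val_inj) /= inordK.
rewrite /= inordK //.
rewrite (reindex (fun x : 'I_2 => [tuple x])) /=; last first.
  by exists (fun t : 1.-tuple 'I_2 => thead t) => [x|t] _ //=; rewrite -tuple1_eta.
rewrite big_ord_recl big_ord1 /=.
by case: j H1 => [[|[|]]] //= _ _; rewrite /nrearr /= ?divr1 ?addr0 ?add0r.
Qed.

Lemma pd_const (f : Defs.pt R n -> R) al a b p c :
  (forall x, f (upd p al a b x) = c) -> pd f al a b p = 0.
Proof.
move=> H; rewrite /pd.
have -> : (fun x => f (upd p al a b x)) = functions.cst c by apply: funext => x; rewrite H.
exact: derive1_cst.
Qed.

Lemma pd_coord (al be : 'I_n) c d a b (p : Defs.pt R n) :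
  pd (fun q => q al c d) be a b p = if (al == be) && (c == a) && (d == b) then 1 else 0.
Proof.
rewrite /pd /upd; case: ifP => _.
  exact: derive1_id.
exact: derive1_cst.
Qed.

Lemma pd_high (L : Defs.pt R n -> R) al a b p : second_order L -> (2 < a + b)%N ->
  pd L al a b p = 0.
Proof.
move=> HL Hab; apply: (@pd_const L al a b p (L p)) => x; apply: HL => be c d Hcd.
rewrite /upd; case: ifP => // /andP[/andP[_ /eqP Hc] /eqP Hd].
by move: Hab; rewrite -Hc -Hd ltnNge Hcd.
Qed.

Variable L : Defs.pt R n -> R.
Hypothesis HL : second_order L.

Definition W (j m : 'I_2) := Sop 2 j (Sop 2 m (dfun L)).

Lemma W_zero j m q al c d : (0 < c + d)%N -> W j m q al c d = 0.
Proof.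
move=> H; rewrite /W !Sop_eq /dfun pd_high ?mulr0 //.
by case: j => [[|[|]]] //= _; case: m => [[|[|]]] //= _; lia.
Qed.

Lemma W00 j m q al : W j m q al 0 0 =
  Sop 2 m (dfun L) q al (nat_of_ord j == 0%N) (nat_of_ord j == 1%N).
Proof. by rewrite /W Sop_eq Kc00 mul1r !addn0. Qed.

Lemma dop_eq j m p be a b : (0 < a + b)%N ->
  dop 2 j (W j m) p be a b =
  if (a == (nat_of_ord j == 0%N)) && (b == (nat_of_ord j == 1%N)) then W j m p be 0 0 else 0.
Proof.
move=> Hab; rewrite /dop /Tapp.
rewrite [X in X + _]big1 ?add0r; last first.
  move=> al _; apply: big1 => s _; apply: big1 => t _.
  by rewrite (@pd_const _ _ _ _ _ 0) ?mulr0 // => x; rewrite W_zero.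
rewrite (eq_bigr (fun al => W j m p al 0 0 *
    (if (al == be) && (((nat_of_ord j == 0%N) : nat) == a) && (((nat_of_ord j == 1%N) : nat) == b) then 1 else 0))); last first.
  move=> al _; rewrite big_ord_recl [X in _ + X]big1 ?addr0; last first.
    move=> a' _; apply: big1 => b' _; rewrite W_zero ?mul0r //=.
  rewrite big_ord_recl [X in _ + X]big1 ?addr0; last by move=> b' _; rewrite W_zero ?mul0r.
  have -> : (fun q : Defs.pt R n => Tcomp 2 j q al (@ord0 2) (@ord0 (3 - @ord0 2)%N)) =
            (fun q : Defs.pt R n => q al (nat_of_ord j == 0%N) (nat_of_ord j == 1%N)).
    by apply: funext => q; rewrite Tcomp_eq Kt00 mul1r !addn0.
  by rewrite pd_coord.
rewrite (bigD1 be) //= big1 ?addr0; last first.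
  by move=> al /negPf ->; rewrite mulr0.
rewrite eqxx /= [a == _]eq_sym [b == _]eq_sym.
by case: ifP; rewrite ?mulr1 ?mulr0.
Qed.

Lemma sumdop m p be a b : (0 < a + b)%N ->
  \sum_(j < 2) dop 2 j (W j m) p be a b = Sop 2 m (dfun L) p be a b.
Proof.
move=> Hab; rewrite big_ord_recl big_ord1 !dop_eq // !W00 /=.
case: a b Hab => [|[|a]] [|[|b]] //= _; rewrite ?addr0 ?add0r //;
  by rewrite Sop_eq /dfun pd_high ?mulr0 //; case: m => [[|[|]]] //= _; lia.
Qed.

End H.

Theorem lemma6 (R : realType) (n : nat) (L : pt R n -> R) :
  second_order L ->
  (forall (i m : 'I_2) (p : pt R n) (al : 'I_n) (a b : nat),
      Sop 2 i (hilbert L m) p al a b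
      = 2^-1 * Sop 2 i (Sop 2 m (dfun L)) p al a b) /\
  (forall (i m : 'I_2) (p : pt R n) (al : 'I_n) (a b : nat),
      Sop 2 i (hilbert L m) p al a b = Sop 2 m (hilbert L i) p al a b).
Proof.
move=> HL.
have P1 : forall (i m : 'I_2) (p : pt R n) (al : 'I_n) (a b : nat),
      Sop 2 i (hilbert L m) p al a b
      = 2^-1 * Sop 2 i (Sop 2 m (dfun L)) p al a b.
  move=> i m p al a b; rewrite Sop_eq [in RHS]Sop_eq /hilbert.
  rewrite (@sumdop R n L HL m p al); last by case: i => [[|[|]]] //= _; lia.
  by field.
split=> [//|] i m p al a b; rewrite !P1 !Sop_eq /dfun.
have Hi : ((nat_of_ord i == 0%N) + (nat_of_ord i == 1%N) = 1)%N by case: i => [[|[|]]].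
have Hm : ((nat_of_ord m == 0%N) + (nat_of_ord m == 1%N) = 1)%N by case: m => [[|[|]]].
case: (posnP (a + b)) => Hab.
  have [-> ->] : a = 0%N /\ b = 0%N by lia.
  rewrite !addn0 !Kc_e Kc00.
  by rewrite (addnC (nat_of_ord m == 0%N)) (addnC (nat_of_ord m == 1%N)).
rewrite (@pd_high R n L _ _ _ p HL); last lia.
rewrite (@pd_high R n L _ _ _ p HL); last lia.
by rewrite !mulr0.
Qed.
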